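(* Let $G$ be a finite group and let $\underline{\mathcal{F}}$ be an indexing system for $G$. Let $\mathbf{O}(\underline{\mathcal{F}})$ be the set of exponents whose $H$-th set consists of the nontrivial orbits $H/K\in\underline{\mathcal{F}}$ (i.e. $K\subsetneq H$), each with some chosen ordering. Then the class of admissible sets of the operad $\mathcal{SM}_{\mathbf{O}(\underline{\mathcal{F}})}$ is $\underline{\mathcal{F}}$.
   Context: A set of exponents $\mathcal{N}=(\mathcal{N}(H))_{H\subseteq G}$: for each subgroup $H$ a set of finite $H$-sets $T$ with chosen orderings $\{1,\dots,|T|\}\cong T$; $\sigma:H\to\Sigma_{|T|}$ the permutation representation and $\Gamma_T=\{(h,\sigma(h))\}\subseteq G\times\Sigma_{|T|}$. With $\mathbb{F}$ the free operad functor on symmetric sequences of $G$-sets and $\widetilde{X}$ the chaotic category on a set $X$ (one morphism between any two objects, applied levelwise), $\mathcal{SM}_{\mathcal{N}}=\widetilde{\mathbb{F}(S_{\mathcal{N}})}$ where $S_{\mathcal{N}}=(G\times\Sigma_0)/\Gamma_\varnothing\sqcup(G\times\Sigma_2)/\Gamma_{**}\sqcup\coprod_{T\in\mathcal{N}}(G\times\Sigma_{|T|})/\Gamma_T$ ($\varnothing$, $**$ trivial). A finite $H$-set $T$ with $|T|=n$ is admissible for an operad $\mathscr{O}$ in $G$-categories if $\mathscr{O}(n)^{\Gamma_T}\neq\varnothing$. An indexing system (Blumberg–Hill) is a family of finite $H$-sets for all $H\subseteq G$ containing trivial actions, closed under isomorphism, restriction, conjugation, subobjects, finite coproducts and products,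 and self-induction. *)

(* Defs.v *)
From HB Require Import structures.
From mathcomp Require Import all_boot all_fingroup.

Set Implicit Arguments.
Unset Strict Implicit.
Unset Printing Implicit Defensive.

Local Open Scope group_scope.

(* Conventions.  The finite group G is the whole finGroupType gT; subgroups  *)
(* H are {group gT}.  A finite H-set T with a chosen ordering                *)
(* {1..|T|} ~ T is encoded as (n, f) with f : gT -> {perm 'I_n} a group      *)
(* morphism on H ([morphic H f]); f is the permutation representation        *)
(* sigma : H -> Sigma_n (mathcomp permutations act on the right, so this is  *)
(* a right H-action i ^ h = f h i).  Gamma_T = {(h, f h) | h in H}.          *)


Definition hequiv (gT : finGroupType) (H : {set gT}) (n m : nat)
  (f : gT -> {perm 'I_n}) (f' : gT -> {perm 'I_m}) (e : 'I_n -> 'I_m) : Prop :=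
  forall h i, h \in H -> e (f h i) = f' h (e i).

(* (n, f) is the orbit H/K (right cosets K x, H acting by right
   multiplication) equipped with an ordering e : 'I_n -> H/K *)
Definition is_orbit_ordering (gT : finGroupType) (H K : {group gT}) (n : nat)
  (f : gT -> {perm 'I_n}) : Prop :=
  morphic H f /\
  exists e : 'I_n -> {set gT},
    [/\ injective e,
        (forall i, e i \in rcosets K H),
        (forall C, C \in rcosets K H -> exists i, e i = C) &
        (forall h i, h \in H -> e (f h i) = e i :* h)].

Definition hfamily (gT : finGroupType) :=
  forall (H : {group gT}) (n : nat), (gT -> {perm 'I_n}) -> Prop.

Definition orbit_in (gT : finGroupType) (F : hfamily gT) (H K : {group gT}) :=
  exists n (f : gT -> {perm 'I_n}), is_orbit_ordering H K f /\ F H n f.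

Record indexing_system (gT : finGroupType) (F : hfamily gT) : Prop := {
  is_hset : forall (H : {group gT}) n (f : gT -> {perm 'I_n}), F H n f -> morphic H f;
  is_trivial : forall (H : {group gT}) n, F H n (fun _ => 1);
  is_iso : forall (H : {group gT}) n m (f : gT -> {perm 'I_n})
      (f' : gT -> {perm 'I_m}) (e : 'I_n -> 'I_m),
      morphic H f' -> bijective e -> hequiv H f f' e -> F H n f -> F H m f';
  is_res : forall (H K : {group gT}) n (f : gT -> {perm 'I_n}), K \subset H -> F H n f -> F K n f;
  is_conj : forall (H : {group gT}) n (f : gT -> {perm 'I_n}) (g : gT),
      F H n f -> F (H :^ g)%G n (fun x => f (g * x * g^-1));
  is_sub : forall (H : {group gT}) n m (f : gT -> {perm 'I_n})
      (f' : gT -> {perm 'I_m}) (e : 'I_m -> 'I_n),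
      morphic H f' -> injective e -> hequiv H f' f e -> F H n f -> F H m f';
  is_coprod : forall (H : {group gT}) n m p (f1 : gT -> {perm 'I_n})
      (f2 : gT -> {perm 'I_m}) (g : gT -> {perm 'I_p})
      (e1 : 'I_n -> 'I_p) (e2 : 'I_m -> 'I_p),
      morphic H g -> injective e1 -> injective e2 ->
      (forall i j, e1 i <> e2 j) ->
      (forall k, (exists i, e1 i = k) \/ (exists j, e2 j = k)) ->
      hequiv H f1 g e1 -> hequiv H f2 g e2 ->
      F H n f1 -> F H m f2 -> F H p g;
  is_prod : forall (H : {group gT}) n m p (f1 : gT -> {perm 'I_n})
      (f2 : gT -> {perm 'I_m}) (g : gT -> {perm 'I_p}) (e : 'I_p -> 'I_n * 'I_m),
      morphic H g -> bijective e ->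
      (forall h k, h \in H -> e (g h k) = (f1 h (e k).1, f2 h (e k).2)) ->
      F H n f1 -> F H m f2 -> F H p g;
  (* self-induction: (p, g) is T x_K H via the K-map j : T -> (p, g) *)
  is_ind : forall (H K : {group gT}) m (f : gT -> {perm 'I_m}) p
      (g : gT -> {perm 'I_p}) (j : 'I_m -> 'I_p),
      K \subset H -> orbit_in F H K -> F K m f -> morphic H g ->
      hequiv K f g j ->
      (forall x, exists t h, h \in H /\ x = g h (j t)) ->
      (forall t t' h h', h \in H -> h' \in H -> g h (j t) = g h' (j t') ->
         exists2 k, k \in K & t = f k t' /\ h' = k * h) ->
      F H p g
}.

(* Free operad on a symmetric sequence of G-sets which is a coproduct of     *)
(* orbits (G x Sigma_{ar i}) / Gam i, i : I.  Elements of F(S)(n): trees     *)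
(* whose vertices are labelled by generators (coset representatives         *)
(* (g, p)), with leaves labelled by 'I_n (bijectively), modulo the coset     *)
(* relation and the Sigma-equivariance relation at each vertex.              *)

Inductive tree (gT : finGroupType) (I : Type) (ar : I -> nat) (n : nat) : Type :=
| Leaf : 'I_n -> tree gT ar n
| Node : forall i : I, gT -> {perm 'I_(ar i)} ->
           ('I_(ar i) -> tree gT ar n) -> tree gT ar n.

Arguments Leaf {gT I ar n}.
Arguments Node {gT I ar n}.

Fixpoint leaves (gT : finGroupType) (I : Type) (ar : I -> nat) (n : nat)
  (t : tree gT ar n) : seq 'I_n :=
  match t with
  | Leaf j => [:: j]
  | Node i _ _ ts => flatten [seq leaves (ts j) | j <- enum 'I_(ar i)]
  end.

Definition wf_tree (gT : finGroupType) (I : Type) (ar : I -> nat) (n : nat)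
  (t : tree gT ar n) : Prop := perm_eq (leaves t) (enum 'I_n).

Inductive teq (gT : finGroupType) (I : Type) (ar : I -> nat)
  (Gam : forall i, {set gT * {perm 'I_(ar i)}}) (n : nat) :
  tree gT ar n -> tree gT ar n -> Prop :=
| teq_refl t : teq Gam t t
| teq_sym t u : teq Gam t u -> teq Gam u t
| teq_trans t u v : teq Gam t u -> teq Gam u v -> teq Gam t v
| teq_cong i g p ts us : (forall j, teq Gam (ts j) (us j)) ->
    teq Gam (Node i g p ts) (Node i g p us)
| teq_coset i g p ts c : c \in Gam i ->
    teq Gam (Node i g p ts) (Node i (g * c.1) (p * c.2) ts)
| teq_sigma i g p q ts :
    teq Gam (Node i g (q * p) ts) (Node i g p (fun j => ts (q^-1 j))).

(* (right) action of G x Sigma_n on trees *)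
Fixpoint tact (gT : finGroupType) (I : Type) (ar : I -> nat) (n : nat)
  (g : gT) (q : {perm 'I_n}) (t : tree gT ar n) : tree gT ar n :=
  match t with
  | Leaf j => Leaf (q j)
  | Node i a p ts => Node i (g^-1 * a) p (fun j => tact g q (ts j))
  end.

(* T = (n, f) admissible for the chaotic operad on the free operad:
   the fixed-point category of Gamma_T is nonempty, i.e. some object
   (element of F(S)(n)) is Gamma_T-fixed. *)
Definition admissible_free (gT : finGroupType) (I : Type) (ar : I -> nat)
  (Gam : forall i, {set gT * {perm 'I_(ar i)}})
  (H : {group gT}) (n : nat) (f : gT -> {perm 'I_n}) : Prop :=
  exists t : tree gT ar n,
    wf_tree t /\ forall h, h \in H -> teq Gam (tact h (f h) t) t.

Inductive gen (gT : finGroupType) : Type :=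
| GNull | GMul | GExp of {group gT} & {group gT}.

Arguments GNull {gT}.
Arguments GMul {gT}.

(* chosen orderings: O H K = (n, f) ordering of H/K *)
Definition orderings (gT : finGroupType) :=
  {group gT} -> {group gT} -> {n : nat & gT -> {perm 'I_n}}.

Definition gen_ok (gT : finGroupType) (F : hfamily gT) (x : gen gT) : Prop :=
  match x with
  | GExp H K => K \proper H /\ orbit_in F H K
  | _ => True
  end.

Definition ar_gen (gT : finGroupType) (O : orderings gT) (x : gen gT) : nat :=
  match x with
  | GNull => 0
  | GMul => 2
  | GExp H K => projT1 (O H K)
  end.

Definition Gam_gen (gT : finGroupType) (O : orderings gT) (x : gen gT) :
  {set gT * {perm 'I_(ar_gen O x)}} :=
  match x as x return {set gT * {perm 'I_(ar_gen O x)}} with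
  | GNull => [set (g, 1) | g : gT]
  | GMul => [set (g, 1) | g : gT]
  | GExp H K => [set (h, projT2 (O H K) h) | h in H]
  end.

Definition genON (gT : finGroupType) (F : hfamily gT) :=
  {x : gen gT | gen_ok F x}.

Definition arON (gT : finGroupType) (F : hfamily gT) (O : orderings gT)
  (i : genON F) : nat := ar_gen O (proj1_sig i).

Definition GamON (gT : finGroupType) (F : hfamily gT) (O : orderings gT)
  (i : genON F) : {set gT * {perm 'I_(arON O i)}} := Gam_gen O (proj1_sig i).

(* admissibility for SM_{O(F)} = chaotic (F(S_{O(F)})) *)
Definition admissible_SM (gT : finGroupType) (F : hfamily gT) (O : orderings gT)
  (H : {group gT}) (n : nat) (f : gT -> {perm 'I_n}) : Prop :=
  @admissible_free gT (genON F) (arON O) (GamON O) H n f.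

(* Main.v *)
Require Import Defs.
From HB Require Import structures.
From mathcomp Require Import all_boot all_fingroup.
From Stdlib Require Import Eqdep.
Set Implicit Arguments.
Unset Strict Implicit.
Unset Printing Implicit Defensive.
Local Open Scope group_scope.

Definition mkperm (T : finType) (g : T -> T) : {perm T} :=
  if injectiveP g is ReflectT Hg then perm Hg else 1.

Lemma mkpermE (T : finType) (g : T -> T) : injective g -> mkperm g =1 g.
Proof. by rewrite /mkperm; case: injectiveP => // Hg _ x; rewrite permE. Qed.

Section Restr.
Variables (gT : finGroupType) (n : nat) (f : gT -> {perm 'I_n}).

Definition emb (A : {set 'I_n}) (i : 'I_#|A|) : 'I_n := enum_val i.

Arguments emb : clear implicits.
Lemma embP (A : {set 'I_n}) i : emb A i \in A. Proof. exact: enum_valP. Qed.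
Lemma emb_inj (A : {set 'I_n}) : injective (emb A). Proof. exact: enum_val_inj. Qed.
Lemma emb_onto (A : {set 'I_n}) x : x \in A -> exists i : 'I_#|A|, emb A i = x.
Proof. by move=> xA; exists (enum_rank_in xA x); rewrite /emb enum_rankK_in. Qed.

Definition restr_fun (A : {set 'I_n}) h (i : 'I_#|A|) : 'I_#|A| :=
  odflt i [pick j | emb A j == f h (emb A i)].

Arguments restr_fun : clear implicits.
Definition stable (K : {set gT}) (A : {set 'I_n}) :=
  forall h x, h \in K -> x \in A -> f h x \in A.

Lemma restr_funE (A : {set 'I_n}) h i : f h (emb A i) \in A -> emb A (restr_fun A h i) = f h (emb A i).
Proof.
move=> hA; rewrite /restr_fun; case: pickP => [j /eqP //|].
by case: (emb_onto hA) => j ej /(_ j); rewrite ej eqxx.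
Qed.

Definition restr (A : {set 'I_n}) h : {perm 'I_#|A|} := mkperm (restr_fun A h).

Arguments restr : clear implicits.
Lemma restrE (A : {set 'I_n}) h i : (forall x, x \in A -> f h x \in A) ->
  emb A (restr A h i) = f h (emb A i).
Proof.
move=> st; rewrite /restr mkpermE; first by rewrite restr_funE // st // embP.
move=> i1 i2 e; apply: emb_inj; apply: (@perm_inj _ (f h)).
have s1 := st _ (embP i1); have s2 := st _ (embP i2).
by rewrite -(restr_funE s1) -(restr_funE s2) e.
Qed.

Lemma restr_morphic (K : {group gT}) A : morphic K f -> stable K A -> morphic K (restr A).
Proof.
move=> /morphicP fM st; apply/morphicP => x y xK yK; apply/permP => i.
apply: emb_inj; rewrite permM.
have stx : forall z, z \in A -> f x z \in A by move=> z; apply: st.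
have sty : forall z, z \in A -> f y z \in A by move=> z; apply: st.
have stxy : forall z, z \in A -> f (x * y) z \in A by move=> z; apply: st; rewrite groupM.
rewrite (restrE _ stxy) (restrE _ sty) (restrE _ stx).
by rewrite (fM x y xK yK) permM.
Qed.

End Restr.

Arguments emb {n} A i.

Section InF.
Variables (gT : finGroupType) (F : hfamily gT) (IS : indexing_system F).
Variables (n : nat) (f : gT -> {perm 'I_n}).

Definition InF (K : {group gT}) (A : {set 'I_n}) := @F K #|A| (restr f A).

Definition incl (A B : {set 'I_n}) (sBA : B \subset A) (i : 'I_#|B|) : 'I_#|A| :=
  enum_rank_in (subsetP sBA _ (embP i)) (emb B i).

Lemma inclE (A B : {set 'I_n}) (sBA : B \subset A) i : emb A (incl sBA i) = emb B i.
Proof. by rewrite /incl {1}/emb enum_rankK_in // (subsetP sBA _ (embP i)). Qed.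

Lemma incl_inj (A B : {set 'I_n}) (sBA : B \subset A) : injective (incl sBA).
Proof. by move=> i j e; apply: emb_inj; rewrite -!(inclE sBA) e. Qed.

Lemma incl_equiv (K : {set gT}) (A B : {set 'I_n}) (sBA : B \subset A) :
  stable f K A -> stable f K B -> hequiv K (restr f B) (restr f A) (incl sBA).
Proof.
move=> sA sB h i hK; apply: emb_inj.
rewrite inclE restrE; last by move=> x xB; exact: sB hK xB.
by rewrite restrE ?inclE // => x xA; exact: sA hK xA.
Qed.

Lemma InF_sub (K : {group gT}) (A B : {set 'I_n}) : morphic K f -> stable f K A -> stable f K B ->
  B \subset A -> InF K A -> InF K B.
Proof.
move=> fM sA sB sBA; apply: (is_sub IS (e := incl sBA)).
- exact: restr_morphic.
- exact: incl_inj.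
- exact: incl_equiv.
Qed.

Lemma stableT (K : {set gT}) : stable f K setT.
Proof. by move=> *; rewrite in_setT. Qed.

Lemma InF_top (K : {group gT}) : morphic K f -> (@F K n f <-> InF K setT).
Proof.
move=> fM; split => H.
- apply: (is_sub IS (e := emb setT) _ _ _ H).
  + apply: restr_morphic => //; exact: stableT.
  + exact: emb_inj.
  + by move=> h i hK; rewrite restrE // => x; rewrite in_setT.
- pose e (i : 'I_n) : 'I_#|[set: 'I_n]| := enum_rank_in (in_setT i) i.
  have eE i : emb setT (e i) = i by rewrite /e /emb enum_rankK_in ?in_setT.
  apply: (is_sub IS (e := e) _ _ _ H) => //.
  + by move=> i j eij; rewrite -(eE i) eij eE.
  + by move=> h i hK; apply: emb_inj; rewrite restrE ?eE // => x; rewrite in_setT.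
Qed.

Lemma set0_empty (i : 'I_#|@set0 'I_n|) : False.
Proof. by have := embP i; rewrite in_set0. Qed.

Lemma InF_empty (K : {group gT}) : morphic K f -> InF K set0.
Proof.
move=> fM; have H0 := is_trivial IS K 0.
apply: (is_sub IS (e := fun i => False_rect _ (set0_empty i)) _ _ _ H0).
- by apply: restr_morphic => // h x _; rewrite in_set0.
- by move=> i; case: (set0_empty i).
- by move=> h i; case: (set0_empty i).
Qed.

Lemma InF_single (K : {group gT}) (x : 'I_n) : morphic K f -> (forall h, h \in K -> f h x = x) ->
  InF K [set x].
Proof.
move=> fM fx; have H1 := is_trivial IS K 1.
have st : stable f K [set x] by move=> h y hK; rewrite !in_set1 => /eqP ->; rewrite fx.
apply: (is_sub IS (e := fun _ => ord0) _ _ _ H1).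
- exact: restr_morphic.
- move=> i j _; apply: emb_inj.
  by have := embP i; have := embP j; rewrite !in_set1 => /eqP -> /eqP ->.
- by move=> h i hK; rewrite perm1.
Qed.

Lemma InF_coprod (K : {group gT}) (A B : {set 'I_n}) : morphic K f -> stable f K A -> stable f K B ->
  (forall x, x \in A -> x \notin B) -> InF K A -> InF K B -> InF K (A :|: B).
Proof.
move=> fM sA sB dAB HA HB.
have sAU : A \subset A :|: B by apply: subsetUl.
have sBU : B \subset A :|: B by apply: subsetUr.
have sU : stable f K (A :|: B).
  by move=> h x hK; rewrite !inE => /orP[] xX; apply/orP; [left; apply: sA | right; apply: sB].
apply: (is_coprod IS (e1 := incl sAU) (e2 := incl sBU) _ _ _ _ _ _ _ HA HB).
- exact: restr_morphic.
- exact: incl_inj.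
- exact: incl_inj.
- move=> i j e; have := f_equal (emb (A :|: B)) e; rewrite !inclE => ee.
  by have := dAB _ (embP i); rewrite ee embP.
- move=> k; have := embP k; rewrite inE => /orP[] kX.
  + left; case: (emb_onto kX) => i ei; exists i; apply: emb_inj; by rewrite inclE.
  + right; case: (emb_onto kX) => i ei; exists i; apply: emb_inj; by rewrite inclE.
- exact: incl_equiv.
- exact: incl_equiv.
Qed.

Lemma InF_ind (K K' : {group gT}) (A B : {set 'I_n}) : morphic K f -> K' \subset K -> orbit_in F K K' ->
  stable f K A -> stable f K' B -> B \subset A -> InF K' B ->
  (forall y, y \in A -> exists h b, [/\ h \in K, b \in B & y = f h b]) ->
  (forall h h' b b', h \in K -> h' \in K -> b \in B -> b' \in B -> f h b = f h' b' ->
     exists2 k, k \in K' & b = f k b' /\ h' = k * h) ->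
  InF K A.
Proof.
move=> fM sK oK sA sB sBA HB cov uni.
have fM' : morphic K' f.
  by apply/morphicP => x y xK yK; apply: (morphicP fM); apply: (subsetP sK).
have sA' : stable f K' A by move=> h x hK; apply: sA; apply: (subsetP sK).
apply: (is_ind IS (j := incl sBA) sK oK HB).
- exact: restr_morphic.
- exact: incl_equiv.
- move=> x; case: (cov _ (embP x)) => h [b [hK bB ex]].
  case: (emb_onto bB) => t et; exists t, h; split => //.
  apply: emb_inj; rewrite restrE ?inclE ?et //; last by move=> z zA; exact: sA hK zA.
- move=> t t' h h' hK h'K /(f_equal (emb A)).
  rewrite restrE; last by move=> z zA; exact: sA hK zA.
  rewrite restrE; last by move=> z zA; exact: sA h'K zA.
  rewrite !inclE.
  case/(uni _ _ _ _ hK h'K (embP t) (embP t')) => k kK [e1 e2]; exists k => //; split => //.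
  apply: emb_inj; rewrite e1 restrE // => z zB; exact: sB kK zB.
Qed.

End InF.

Arguments emb {n} A i.

Section Morph.
Variables (gT : finGroupType) (m : nat) (f : gT -> {perm 'I_m}) (K : {group gT}).
Hypothesis fM : morphic K f.
Lemma fmorph1 : f 1 = 1. Proof. exact: (morph1 (morphm_morphism fM)). Qed.
Lemma fmorphV h : h \in K -> f h^-1 = (f h)^-1.
Proof. exact: (morphV (morphm_morphism fM)). Qed.
Lemma fmorphM h k : h \in K -> k \in K -> f (h * k) = f h * f k.
Proof. exact: (morphicP fM). Qed.
Lemma fmorphVK h x : h \in K -> f h^-1 (f h x) = x.
Proof. by move=> hK; rewrite fmorphV // permK. Qed.
Lemma fmorphKV h x : h \in K -> f h (f h^-1 x) = x.
Proof. by move=> hK; rewrite fmorphV // permKV. Qed.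
Lemma morphic_sub (K' : {group gT}) : K' \subset K -> morphic K' f.
Proof. by move=> sK; apply/morphicP => x y xK yK; apply: fmorphM; apply: (subsetP sK). Qed.
End Morph.

Section Orbit.
Variables (gT : finGroupType) (F : hfamily gT) (IS : indexing_system F).
Variables (n : nat) (f : gT -> {perm 'I_n}).

Definition orb (K : {set gT}) (x : 'I_n) := [set f h x | h in K].
Definition stabs (K : {set gT}) (x : 'I_n) := [set h in K | f h x == x].
Definition stabG (K : {set gT}) (x : 'I_n) : {group gT} := <<stabs K x>>%G.

Variable (K : {group gT}).
Hypothesis fM : morphic K f.

Lemma stabs_group x : group_set (stabs K x).
Proof.
rewrite /stabs; apply/group_setP; split; first by rewrite inE group1 (fmorph1 fM) /= permE.
move=> h k; rewrite !inE => /andP[hK /eqP hx] /andP[kK /eqP kx].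
by rewrite groupM // (fmorphM fM) // permM hx kx eqxx.
Qed.

Lemma stabGE x : stabG K x = stabs K x :> {set gT}.
Proof. by rewrite /stabG /= gen_set_id // stabs_group. Qed.

Lemma stab_sub x : stabG K x \subset K.
Proof. by rewrite stabGE; apply/subsetP => h; rewrite inE => /andP[]. Qed.

Lemma mem_stab x h : (h \in stabG K x) = (h \in K) && (f h x == x).
Proof. by rewrite stabGE /stabs inE. Qed.

Lemma orb_stable x : stable f K (orb K x).
Proof.
move=> h y hK /imsetP[k kK ->]; apply/imsetP; exists (k * h); first by rewrite groupM.
by rewrite (fmorphM fM) // permM.
Qed.

Lemma orb_refl x : x \in orb K x.
Proof. by apply/imsetP; exists 1; rewrite ?group1 // (fmorph1 fM) perm1. Qed.

Lemma orb_sub (A : {set 'I_n}) x : stable f K A -> x \in A -> orb K x \subset A.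
Proof. by move=> sA xA; apply/subsetP => y /imsetP[k kK ->]; apply: sA. Qed.

Lemma coset_stab x y : y \in K -> [set k in K | f k x == f y x] = stabG K x :* y.
Proof.
move=> yK; apply/setP => k; rewrite mem_rcoset mem_stab !inE groupMr ?groupV //.
case kK: (k \in K) => //=.
rewrite (fmorphM fM) ?groupV // permM (fmorphV fM) //.
apply/eqP/eqP => [-> | e]; first by rewrite permK.
by rewrite -{2}e permKV.
Qed.

Lemma InF_orbit (A : {set 'I_n}) x : stable f K A -> x \in A -> InF F f K A ->
  orbit_in F K (stabG K x).
Proof.
move=> sA xA HA.
have HO : InF F f K (orb K x).
  by apply: (InF_sub IS fM sA (@orb_stable x) (orb_sub sA xA) HA).
exists #|orb K x|, (restr f (orb K x)); split => //; split.
  exact: restr_morphic fM (@orb_stable x).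
exists (fun i => [set k in K | f k x == emb (orb K x) i]); split.
- move=> i j eij; apply: emb_inj.
  have := embP i => /imsetP[k kK ek].
  have : k \in [set k in K | f k x == emb (orb K x) i] by rewrite inE kK ek eqxx.
  by rewrite eij inE => /andP[_ /eqP <-].
- move=> i; have := embP i => /imsetP[k kK ->].
  by rewrite coset_stab //; apply/rcosetsP; exists k.
- move=> C /rcosetsP[y yK ->].
  have : f y x \in orb K x by apply/imsetP; exists y.
  case/emb_onto => i ei; exists i; by rewrite ei coset_stab.
- move=> h i hK; rewrite restrE; last by move=> z zO; exact: orb_stable hK zO.
  have := embP i => /imsetP[k kK ->].
  rewrite -permM -(fmorphM fM) // !coset_stab ?groupM //.
  by rewrite rcosetM.
Qed.

End Orbit.

Lemma stable_diff (gT : finGroupType) (n : nat) (f : gT -> {perm 'I_n}) (K : {group gT})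
  (A B : {set 'I_n}) : morphic K f -> stable f K A -> stable f K B -> stable f K (A :\: B).
Proof.
move=> fM sA sB h y hK; rewrite !inE => /andP[yB yA]; rewrite sA // andbT.
apply: contra yB => fyB; rewrite -(fmorphVK fM y hK); apply: sB => //; by rewrite groupV.
Qed.

Lemma perm_flatten_map (T : eqType) (S : Type) (F G : S -> seq T) (s : seq S) :
  (forall j, perm_eq (F j) (G j)) -> perm_eq (flatten (map F s)) (flatten (map G s)).
Proof. by move=> FG; elim: s => //= a s IH; rewrite perm_cat. Qed.

Lemma perm_enum_perm k (s : {perm 'I_k}) : perm_eq (map s (enum 'I_k)) (enum 'I_k).
Proof.
apply: uniq_perm; first by rewrite map_inj_uniq ?enum_uniq //; apply: perm_inj.
  exact: enum_uniq.
move=> j; rewrite mem_enum; apply/mapP; exists (s^-1 j); rewrite ?mem_enum //.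
by rewrite permKV.
Qed.

Lemma flatten_reindex (T : eqType) k (F : 'I_k -> seq T) (s : {perm 'I_k}) :
  perm_eq (flatten [seq F (s j) | j <- enum 'I_k]) (flatten [seq F j | j <- enum 'I_k]).
Proof.
have -> : [seq F (s j) | j <- enum 'I_k] = map F (map s (enum 'I_k)) by elim: (enum 'I_k) => //= a l ->.
by apply: perm_flatten; apply: perm_map; apply: perm_enum_perm.
Qed.

Section Trees.
Variables (gT : finGroupType) (I : Type) (ar : I -> nat).
Variable (Gam : forall i, {set gT * {perm 'I_(ar i)}}).
Variable (n : nat).
Hypothesis Gam1 : forall i, (1, 1) \in Gam i.
Hypothesis GamV : forall i c, c \in Gam i -> (c.1^-1, c.2^-1) \in Gam i.
Hypothesis GamM : forall i c d, c \in Gam i -> d \in Gam i -> (c.1 * d.1, c.2 * d.2) \in Gam i.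

Local Notation tree := (tree gT ar n).

Inductive R : tree -> tree -> Prop :=
| RL j : R (Leaf j) (Leaf j)
| RN i (g g' : gT) (p p' : {perm 'I_(ar i)}) (ts us : 'I_(ar i) -> tree) (c : gT * {perm 'I_(ar i)}) : c \in Gam i -> g' = g * c.1 ->
    (forall j, R (ts (p^-1 j)) (us (p'^-1 (c.2 j)))) -> R (Node i g p ts) (Node i g' p' us).

Lemma R_refl t : R t t.
Proof.
elim: t => [j | i g p ts IH]; first exact: RL.
apply: (RN (c := (1, 1))) => //=; [exact: Gam1 | by rewrite mulg1 | ].
by move=> j; rewrite perm1; apply: IH.
Qed.

Lemma R_sym t u : R t u -> R u t.
Proof.
elim => [j | i g g' p p' ts us c cG -> _ IH]; first exact: RL.
apply: (RN (c := (c.1^-1, c.2^-1))) => /=; first exact: GamV.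
  by rewrite mulgK.
move=> j; have := IH (c.2^-1 j); by rewrite permKV.
Qed.

Lemma R_trans t u v : R t u -> R u v -> R t v.
Proof.
move=> Rtu; elim: Rtu v => [j | i g g' p p' ts us c cG -> _ IH] v Ruv.
  by [].
inversion Ruv; subst.
repeat match goal with H : existT _ _ _ = existT _ _ _ |- _ => apply Eqdep.EqdepTheory.inj_pair2 in H end; subst.
apply: (RN (c := (c.1 * c0.1, c.2 * c0.2))) => /=; first exact: GamM.
  by rewrite mulgA.
move=> j; apply: IH; rewrite permM; by match goal with H : forall j, R _ _ |- _ => apply: H end.
Qed.

Lemma teq_R t u : teq Gam t u -> R t u.
Proof.
elim => {t u}.
- by move=> t; apply: R_refl.
- by move=> t u _; apply: R_sym.
- by move=> t u v _ H1 _ H2; apply: R_trans H1 H2.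
- move=> i g p ts us _ IH; apply: (RN (c := (1, 1))) => //=; [exact: Gam1 | by rewrite mulg1 | ].
  by move=> j; rewrite perm1.
- move=> i g p ts c cG; apply: (RN (c := c)) => // j.
  by rewrite invMg permM permK; apply: R_refl.
- move=> i g p q ts; apply: (RN (c := (1, 1))) => //=; [exact: Gam1 | by rewrite mulg1 | ].
  by move=> j; rewrite perm1 invMg permM; apply: R_refl.
Qed.

Lemma leaves_tact g q (t : tree) : leaves (tact g q t) = map q (leaves t).
Proof.
elim: t => [j | i a p ts IH] //=.
by rewrite map_flatten -map_comp; congr flatten; apply: eq_map => j /=; rewrite IH.
Qed.

Lemma R_leaves t u : R t u -> perm_eq (leaves t) (leaves u).
Proof.
elim => [j | i g g' p p' ts us c cG _ _ IH] //=.
have h1 := flatten_reindex (fun j => leaves (ts j)) p^-1.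
have h3 := flatten_reindex (fun j => leaves (us j)) (c.2 * p'^-1).
have h2 := perm_flatten_map (enum 'I_(ar i)) IH.
rewrite perm_sym in h1; apply: (perm_trans h1); apply: (perm_trans h2).
by apply: etrans h3; congr (perm_eq (flatten _)); apply: eq_map => j; rewrite permM.
Qed.

Lemma R_leaf_inv a b : R (Leaf a) (Leaf b) -> a = b.
Proof. by move=> H; inversion H. Qed.

Lemma R_node_inv i g g' p p' ts us : R (Node i g p ts) (Node i g' p' us) ->
  exists2 c, c \in Gam i & g' = g * c.1 /\ forall j, R (ts (p^-1 j)) (us (p'^-1 (c.2 j))).
Proof.
move=> H; inversion H; subst.
repeat match goal with H : existT _ _ _ = existT _ _ _ |- _ => apply Eqdep.EqdepTheory.inj_pair2 in H end; subst.
by exists c.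
Qed.

End Trees.

Arguments emb {n} A i.

Section Gam.
Variables (gT : finGroupType) (F : hfamily gT) (O : orderings gT).
Hypothesis IS : indexing_system F.
Hypothesis HO : forall H K : {group gT}, K \proper H -> orbit_in F H K ->
     is_orbit_ordering H K (projT2 (O H K)).

Definition gdom (x : gen gT) : {group gT} :=
  match x with GExp H K => H | _ => [set: gT]%G end.

Definition gam2 (x : gen gT) (a : gT) : {perm 'I_(ar_gen O x)} :=
  match x as x0 return {perm 'I_(ar_gen O x0)} with
  | GExp H K => projT2 (O H K) a
  | _ => 1
  end.

Lemma Gam_genP x (c : gT * {perm 'I_(ar_gen O x)}) :
  c \in Gam_gen O x <-> c.1 \in gdom x /\ c.2 = gam2 x c.1.
Proof.
case: x c => [||H K] [a p] /=; split.
- by case/imsetP => b _ [-> ->]; rewrite in_setT.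
- by case=> _ ->; apply/imsetP; exists a.
- by case/imsetP => b _ [-> ->]; rewrite in_setT.
- by case=> _ ->; apply/imsetP; exists a.
- by case/imsetP => b bH [-> ->].
- by case=> aH ->; apply/imsetP; exists a.
Qed.

Lemma gam2_morphic x : gen_ok F x -> morphic (gdom x) (gam2 x).
Proof.
case: x => [||H K] /= ok.
- by apply/morphicP => a b _ _; rewrite mulg1.
- by apply/morphicP => a b _ _; rewrite mulg1.
- by case: ok => pr oi; case: (HO pr oi).
Qed.

Lemma GamON1 (i : genON F) : (1, 1) \in GamON O i.
Proof.
case: i => x ok; rewrite /GamON /=; apply/Gam_genP => /=; split.
  by rewrite group1.
by rewrite (fmorph1 (gam2_morphic ok)).
Qed.

Lemma GamONV (i : genON F) c : c \in GamON O i -> (c.1^-1, c.2^-1) \in GamON O i.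
Proof.
case: i c => x ok c; rewrite /GamON /= => /Gam_genP [c1 c2]; apply/Gam_genP => /=.
split; first by rewrite groupV.
by rewrite c2 (fmorphV (gam2_morphic ok)).
Qed.

Lemma GamONM (i : genON F) c d : c \in GamON O i -> d \in GamON O i ->
  (c.1 * d.1, c.2 * d.2) \in GamON O i.
Proof.
case: i c d => x ok c d; rewrite /GamON /= => /Gam_genP [c1 c2] /Gam_genP [d1 d2].
apply/Gam_genP => /=; split.
  by rewrite groupM.
by rewrite c2 d2 (fmorphM (gam2_morphic ok)).
Qed.

End Gam.

Section Gam2.
Variables (gT : finGroupType) (F : hfamily gT) (O : orderings gT).
Hypothesis IS : indexing_system F.
Hypothesis HO : forall H K : {group gT}, K \proper H -> orbit_in F H K ->
     is_orbit_ordering H K (projT2 (O H K)).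

Lemma orbit_iso (H K : {group gT}) m1 m2 (f1 : gT -> {perm 'I_m1}) (f2 : gT -> {perm 'I_m2}) :
  is_orbit_ordering H K f1 -> is_orbit_ordering H K f2 -> @F H m1 f1 -> @F H m2 f2.
Proof.
case=> f1M [e1 [e1i e1c e1s e1e]] [f2M [e2 [e2i e2c e2s e2e]]] HF.
have ex j : exists i, e1 i == e2 j by case: (e1s _ (e2c j)) => i ei; exists i; rewrite ei.
pose e j := xchoose (ex j).
have eE j : e1 (e j) = e2 j by apply/eqP; apply: (xchooseP (ex j)).
apply: (is_sub IS (e := e) f2M _ _ HF).
- by move=> j j' ejj; apply: e2i; rewrite -!eE ejj.
- by move=> h j hH; apply: e1i; rewrite e1e // !eE e2e.
Qed.

Lemma gam_morphic (x : gen gT) (ok : gen_ok F x) (K : {group gT}) g :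
  (forall h, h \in K -> g^-1 * h * g \in gdom x) ->
  morphic K (fun h => gam2 O x (g^-1 * h * g)).
Proof.
move=> dK; apply/morphicP => a b aK bK.
rewrite -(fmorphM (gam2_morphic HO ok)) ?dK //.
by congr (gam2 O x); rewrite !mulgA mulgK.
Qed.

Lemma gam_F (x : gen gT) (ok : gen_ok F x) (K : {group gT}) g :
  (forall h, h \in K -> g^-1 * h * g \in gdom x) ->
  @F K (ar_gen O x) (fun h => gam2 O x (g^-1 * h * g)).
Proof.
move=> dK; have := gam_morphic ok dK; move: dK.
  case: x ok => [||H' K'] /= ok dK fM.
  - exact: (is_trivial IS).
  - exact: (is_trivial IS).
  case: ok => pr [m0 [f0 [ord0 F0]]].
  have F1 := orbit_iso ord0 (HO pr (ex_intro _ m0 (ex_intro _ f0 (conj ord0 F0)))) F0.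
  have F2 := is_conj IS g^-1 F1.
  have sK : K \subset (H' :^ g^-1)%G.
    apply/subsetP => h hK; rewrite /= mem_conjg invgK /conjg mulgA; exact: dK.
  have F3 := is_res IS sK F2.
  apply: (is_sub IS (e := id) fM _ _ F3) => // h i hK /=.
  by rewrite invgK.
Qed.

End Gam2.

Arguments emb {n} A i.

Section NodeStep.
Variables (gT : finGroupType) (F : hfamily gT) (IS : indexing_system F).
Variables (n : nat) (f : gT -> {perm 'I_n}) (K : {group gT}).
Hypothesis fM : morphic K f.
Variables (k : nat) (pi : gT -> {perm 'I_k}) (L : 'I_k -> {set 'I_n}).
Hypothesis piM : morphic K pi.
Hypothesis Fpi : @F K k pi.
Hypothesis IH : forall j, InF F f (stabG pi K j) (L j).
Hypothesis Lf : forall h j y, h \in K -> y \in L j -> f h y \in L (pi h j).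
Hypothesis Lb : forall h j z, h \in K -> z \in L (pi h j) -> exists2 y, y \in L j & z = f h y.
Hypothesis Ld : forall j j' y, j != j' -> y \in L j -> y \notin L j'.

Definition LS (S : {set 'I_k}) := \bigcup_(j in S) L j.

Lemma LS_stable S : stable pi K S -> stable f K (LS S).
Proof.
move=> sS h y hK /bigcupP[j jS yj]; apply/bigcupP; exists (pi h j); first exact: sS.
exact: Lf.
Qed.

Lemma node_orbit j : InF F f K (LS (orb pi K j)).
Proof.
have sO := orb_stable piM (x:=j).
have oK : orbit_in F K (stabG pi K j).
  have st : stable pi K setT by move=> *; rewrite in_setT.
  apply: (InF_orbit IS piM (A:=setT) (x:=j) st (in_setT j)).
  by apply/(InF_top IS piM).
have sK := stab_sub piM j.
apply: (InF_ind IS fM sK oK (LS_stable sO) _ _ (IH j)).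
- move=> h y; rewrite (mem_stab piM) => /andP[hK /eqP hj] yL.
  by have := Lf hK yL; rewrite hj.
- by apply/subsetP => y yL; apply/bigcupP; exists j => //; apply: (orb_refl piM).
- move=> y /bigcupP[j1 /imsetP[h hK ->] yL].
  by case: (Lb hK yL) => b bL ->; exists h, b.
- move=> h h' b b' hK h'K bL b'L e.
  have e1 := Lf hK bL; have e2 := Lf h'K b'L.
  have pj : pi h j = pi h' j.
    apply/eqP; apply: contraT => ne; have := Ld ne e1; by rewrite e e2.
  exists (h' * h^-1); last split.
  + rewrite (mem_stab piM) groupM ?groupV //= (fmorphM piM) ?groupV // permM -pj.
    by rewrite (fmorphVK piM).
  + by rewrite (fmorphM fM) ?groupV // permM -e (fmorphVK fM).
  + by rewrite mulgKV.
Qed.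

Lemma node_all (S : {set 'I_k}) : stable pi K S -> InF F f K (LS S).
Proof.
move: {2}#|S|.+1 (ltnSn #|S|) => N; elim: N S => // N IHN S lt sS.
case: (set_0Vmem S) => [-> | [j jS]].
  have -> : LS set0 = set0.
    by apply/setP => y; rewrite in_set0; apply/bigcupP => [[j]]; rewrite in_set0.
  exact: (InF_empty IS fM).
pose Oj := orb pi K j.
have sO : stable pi K Oj := orb_stable piM (x:=j).
have sS' := stable_diff piM sS sO.
have OS : Oj \subset S := orb_sub sS jS.
have eq : LS S = LS Oj :|: LS (S :\: Oj).
  apply/setP => y; rewrite inE; apply/bigcupP/orP.
  - case=> j1 j1S yL; case: (boolP (j1 \in Oj)) => j1O.
      by left; apply/bigcupP; exists j1.
    by right; apply/bigcupP; exists j1; rewrite // inE j1O.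
  - case=> /bigcupP[j1 j1X yL]; exists j1 => //.
      exact: (subsetP OS).
    by move: j1X; rewrite inE => /andP[].
rewrite eq; apply: (InF_coprod IS fM (LS_stable sO) (LS_stable sS')).
- move=> y /bigcupP[j1 j1O y1]; apply/bigcupP => [[j2]]; rewrite inE => /andP[j2O _] y2.
  have ne : j1 != j2 by apply: contraNneq j2O => <-.
  by have := Ld ne y1; rewrite y2.
- exact: node_orbit.
- apply: IHN => //; rewrite -ltnS; apply: leq_trans lt.
  rewrite ltnS; apply: proper_card; apply/properP; split.
    by apply/subsetP => y; rewrite inE => /andP[].
  by exists j; rewrite // inE (orb_refl piM).
Qed.

End NodeStep.

Arguments emb {n} A i.

Lemma uniq_flatten_in (T S : eqType) (Fm : S -> seq T) s j :
  uniq (flatten (map Fm s)) -> j \in s -> uniq (Fm j).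
Proof.
elim: s => //= a s IH; rewrite cat_uniq => /and3P[ua _ us]; rewrite inE => /orP[/eqP -> //|].
exact: IH.
Qed.

Lemma uniq_flatten_disj (T S : eqType) (Fm : S -> seq T) s j j' y :
  uniq s -> uniq (flatten (map Fm s)) -> j \in s -> j' \in s -> j != j' ->
  y \in Fm j -> y \notin Fm j'.
Proof.
elim: s => //= a s IH /andP[nas us]; rewrite cat_uniq => /and3P[ua hs uf].
rewrite !inE => /orP[/eqP ej | js] /orP[/eqP ej' | j's] ne yj.
- by rewrite ej ej' eqxx in ne.
- apply/negP => yj'; move/negP: hs; apply; apply/hasP; exists y; last by rewrite -ej.
  by apply/flatten_mapP; exists j'.
- apply/negP => yj'; move/negP: hs; apply; apply/hasP; exists y; last by rewrite -ej'.
  by apply/flatten_mapP; exists j.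
- exact: IH.
Qed.

Section Claim.
Variables (gT : finGroupType) (F : hfamily gT) (O : orderings gT).
Hypothesis IS : indexing_system F.
Hypothesis HO : forall H K : {group gT}, K \proper H -> orbit_in F H K ->
     is_orbit_ordering H K (projT2 (O H K)).
Variables (n : nat) (f : gT -> {perm 'I_n}).
Local Notation arF := (@arON gT F O).
Local Notation GmF := (@GamON gT F O).

Lemma claim (t : tree gT arF n) : forall K : {group gT}, morphic K f ->
  uniq (leaves t) -> (forall h, h \in K -> R GmF (tact h (f h) t) t) ->
  InF F f K [set y in leaves t].
Proof.
elim: t => [a | i g p ts IHt] K fM ut fx.
  have -> : [set y in leaves (Leaf a : tree gT arF n)] = [set a].
    by apply/setP => y; rewrite !inE.
  apply: (InF_single IS fM) => h hK; exact: R_leaf_inv (fx h hK).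
case: i ts p IHt ut fx => x ok ts p IHt ut fx.
pose pi h := gam2 O x (g^-1 * h * g).
have key : forall h, h \in K -> g^-1 * h * g \in gdom x /\
    forall j, R GmF (tact h (f h) (ts (p^-1 j))) (ts (p^-1 (pi h j))).
  move=> h hK; have := fx h hK; rewrite /= => H0.
  have [c cG [eg Rj]] := R_node_inv H0; case/Gam_genP: cG => c1 c2.
  have ec : c.1 = g^-1 * h * g.
    by rewrite -[c.1](mulKg (h^-1 * g)) -eg invMg invgK.
  split; first by rewrite -ec.
  by move=> j; rewrite /pi -ec -c2; apply: Rj.
have dK h : h \in K -> g^-1 * h * g \in gdom x by case/key.
have piM : morphic K pi := gam_morphic HO ok dK.
have Fpi : @F K _ pi := gam_F IS HO ok dK.
pose L j := [set y in leaves (ts (p^-1 j))].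
have Lf h j y : h \in K -> y \in L j -> f h y \in L (pi h j).
  move=> hK; rewrite !inE => yj; have := R_leaves ((key h hK).2 j).
  by rewrite leaves_tact => /perm_mem <-; apply: map_f.
have Lb h j z : h \in K -> z \in L (pi h j) -> exists2 y, y \in L j & z = f h y.
  move=> hK; rewrite !inE; have := R_leaves ((key h hK).2 j).
  rewrite leaves_tact => /perm_mem <- /mapP[y yj ->]; exists y => //; by rewrite inE.
have Ld j j' y : j != j' -> y \in L j -> y \notin L j'.
  move=> ne; rewrite !inE; apply: (uniq_flatten_disj (Fm := fun j => leaves (ts j))
     (s := enum 'I_(arF (exist _ x ok)))) => //; rewrite ?enum_uniq ?mem_enum //.
  by rewrite (inj_eq perm_inj).
have IH j : InF F f (stabG pi K j) (L j).
  have sK := stab_sub piM j.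
  apply: IHt (morphic_sub fM sK) _ _.
    by apply: (uniq_flatten_in (Fm := fun j => leaves (ts j)) ut); rewrite mem_enum.
  move=> h; rewrite (mem_stab piM) => /andP[hK /eqP hj].
  by have := (key h hK).2 j; rewrite hj.
have := node_all IS fM piM Fpi IH Lf Lb Ld (S := setT) (fun _ _ _ _ => in_setT _).
congr (InF F f K _); apply/setP => y; rewrite inE; apply/bigcupP/idP.
- case=> j _; rewrite inE => yj; apply/flatten_mapP; exists (p^-1 j) => //.
  by rewrite mem_enum.
- case/flatten_mapP => j0 _ yj; exists (p j0); rewrite ?in_setT // inE permK //.
Qed.

End Claim.

Arguments emb {n} A i.

Lemma I0_False (j : 'I_0) : False. Proof. by case: j. Qed.

Section Build.
Variables (gT : finGroupType) (F : hfamily gT) (O : orderings gT).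
Hypothesis IS : indexing_system F.
Hypothesis HO : forall H K : {group gT}, K \proper H -> orbit_in F H K ->
     is_orbit_ordering H K (projT2 (O H K)).
Variables (H : {group gT}) (n : nat) (f : gT -> {perm 'I_n}).
Hypothesis fM : morphic H f.
Local Notation arF := (@arON gT F O).
Local Notation GmF := (@GamON gT F O).
Local Notation T := (tree gT arF n).

Definition iNull : genON F := exist _ GNull I.
Definition iMul : genON F := exist _ GMul I.

Definition t_null : T := Node iNull 1 1 (fun j => False_rect _ (I0_False j)).

Lemma t_null_leaves : leaves t_null = [::].
Proof.
rewrite /=; have : size (enum 'I_0) = 0 by rewrite size_enum_ord.
by case: (enum 'I_0).
Qed.

Lemma t_null_fixed h : teq GmF (tact h (f h) t_null) t_null.
Proof.
have cG : (h, 1) \in GmF iNull by apply/imsetP; exists h.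
apply: teq_trans (teq_coset _ _ _ cG) _ => /=.
rewrite mulg1 mulVg mulg1; apply: teq_cong => j; case: (I0_False j).
Qed.

Definition tmul (t1 t2 : T) : T :=
  Node iMul 1 1 (fun j => if nat_of_ord j == 0 then t1 else t2).

Lemma tmul_leaves t1 t2 : leaves (tmul t1 t2) = leaves t1 ++ leaves t2.
Proof.
change (flatten [seq leaves (if nat_of_ord j == 0 then t1 else t2) | j <- enum 'I_2]
   = leaves t1 ++ leaves t2).
rewrite (map_comp (fun m => leaves (if m == 0 then t1 else t2)) val).
by rewrite val_enum_ord /= cats0.
Qed.

Lemma tmul_fixed t1 t2 h : teq GmF (tact h (f h) t1) t1 -> teq GmF (tact h (f h) t2) t2 ->
  teq GmF (tact h (f h) (tmul t1 t2)) (tmul t1 t2).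
Proof.
move=> e1 e2.
have cG : (h, 1) \in GmF iMul by apply/imsetP; exists h.
pose ch := fun j : 'I_(arF iMul) => if nat_of_ord j == 0 then t1 else t2.
apply: (@teq_trans _ _ _ _ _ _ (Node iMul (h^-1 * 1) 1 ch)).
  by apply: teq_cong => j; rewrite /ch; case: (nat_of_ord j == 0).
have := @teq_coset _ _ _ GmF n iMul (h^-1 * 1) 1 ch (h, 1) cG.
by rewrite /= mulg1 mulVg mulg1.
Qed.

Lemma orbit_tree x : orbit_in F H (stabG f H x) ->
  exists t : T, perm_eq (leaves t) (enum (orb f H x)) /\
    forall h, h \in H -> teq GmF (tact h (f h) t) t.
Proof.
move=> oi; set Kx := stabG f H x.
case: (boolP (Kx \proper H)) => pr; last first.
  have fx h : h \in H -> f h x = x.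
    move=> hH; have sHK : H \subset Kx.
      by move: pr; rewrite properE (stab_sub fM x) /= negbK.
    by have := subsetP sHK h hH; rewrite (mem_stab fM) => /andP[_ /eqP].
  have -> : orb f H x = [set x].
    apply/setP => y; rewrite inE; apply/imsetP/eqP => [[h hH ->] | ->]; first exact: fx.
    by exists 1; rewrite ?group1 // (fmorph1 fM) perm1.
  exists (Leaf x); rewrite enum_set1; split => // h hH /=; rewrite fx //; exact: teq_refl.
have ok : gen_ok F (GExp H Kx) by split.
case: (HO pr oi) => fOM [eO [eOi eOc eOs eOe]].
pose fO := projT2 (O H Kx).
pose iota j := f (repr (eO j)) x.
have iotaE j y : y \in H -> eO j = Kx :* y -> iota j = f y x.
  move=> yH ey; rewrite /iota ey; have := mem_repr_rcoset Kx y.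
  case/rcosetP => k kK ->; have kH := subsetP (stab_sub fM x) k kK.
  rewrite (fmorphM fM) // permM; move: kK; rewrite (mem_stab fM) => /andP[_ /eqP ->] //.
have eOr j : exists2 y, y \in H & eO j = Kx :* y by apply/rcosetsP; apply: eOc.
have iota_inj : injective iota.
  move=> j1 j2; case: (eOr j1) => y1 y1H e1; case: (eOr j2) => y2 y2H e2.
  rewrite (iotaE _ _ y1H e1) (iotaE _ _ y2H e2) => e; apply: eOi.
  by rewrite e1 e2 -(coset_stab fM x y1H) -(coset_stab fM x y2H) e.
have iota_eq h j : h \in H -> iota (fO h j) = f h (iota j).
  move=> hH; case: (eOr j) => y yH ey.
  rewrite (iotaE _ _ yH ey) (iotaE _ (y * h)) ?groupM // ?eOe // ?ey ?rcosetM //.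
  by rewrite (fmorphM fM) // permM.
pose iE : genON F := exist _ (GExp H Kx) ok.
exists (Node iE 1 1 (fun j => Leaf (iota j))); split.
  have -> : leaves (Node iE 1 1 (fun j => Leaf (iota j)) : T) = map iota (enum 'I_(arF iE)).
    change (flatten [seq [:: iota j] | j <- enum 'I_(arF iE)] = map iota (enum 'I_(arF iE))).
    by elim: (enum _) => //= a l ->.
  apply: uniq_perm; [by rewrite (map_inj_uniq iota_inj) enum_uniq | exact: enum_uniq | ].
  move=> y; rewrite mem_enum; apply/mapP/imsetP.
    case=> j _ ->; case: (eOr j) => z zH ez; exists z => //; exact: iotaE.
  case=> z zH ->; have : Kx :* z \in rcosets Kx H by apply/rcosetsP; exists z.
  by case/eOs => j ej; exists j; rewrite ?mem_enum // (iotaE _ _ zH ej).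
move=> h hH.
have cG : (h, fO h) \in GmF iE by apply/imsetP; exists h.
apply: (@teq_trans _ _ _ _ _ _ (Node iE (h^-1 * 1) 1 (fun j => Leaf (iota (fO h j))))).
  by apply: teq_cong => j /=; rewrite iota_eq //; apply: teq_refl.
apply: (@teq_trans _ _ _ _ _ _ (Node iE 1 (fO h * 1) (fun j => Leaf (iota (fO h j))))).
  have := @teq_coset _ _ _ GmF n iE (h^-1 * 1) 1 (fun j => Leaf (iota (fO h j))) (h, fO h) cG.
  by rewrite /= mulg1 mulVg mul1g mulg1.
apply: teq_trans (teq_sigma _ _ _ _ _) _.
by apply: teq_cong => j; rewrite permKV; apply: teq_refl.
Qed.

Lemma claim2 (A : {set 'I_n}) : stable f H A -> InF F f H A ->
  exists t : T, perm_eq (leaves t) (enum A) /\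
    forall h, h \in H -> teq GmF (tact h (f h) t) t.
Proof.
move: {2}#|A|.+1 (ltnSn #|A|) => N; elim: N A => // N IHN A lt sA HA.
case: (set_0Vmem A) => [-> | [x xA]].
  by exists t_null; rewrite t_null_leaves enum_set0; split => // h _; apply: t_null_fixed.
pose Ox := orb f H x.
have sO : stable f H Ox := orb_stable fM (x:=x).
have sA' := stable_diff fM sA sO.
have OA : Ox \subset A := orb_sub sA xA.
have oi := InF_orbit IS fM sA xA HA.
have [t1 [l1 f1]] := orbit_tree oi.
have HA' : InF F f H (A :\: Ox).
  apply: (InF_sub IS fM sA sA' _ HA); by apply/subsetP => y; rewrite inE => /andP[].
have [t2 [l2 f2]] : exists t : T, perm_eq (leaves t) (enum (A :\: Ox)) /\
    forall h, h \in H -> teq GmF (tact h (f h) t) t.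
  apply: IHN => //; rewrite -ltnS; apply: leq_trans lt.
  rewrite ltnS; apply: proper_card; apply/properP; split.
    by apply/subsetP => y; rewrite inE => /andP[].
  by exists x; rewrite // inE (orb_refl fM).
exists (tmul t1 t2); split; last by move=> h hH; apply: tmul_fixed; [apply: f1 | apply: f2].
rewrite tmul_leaves; apply: uniq_perm; rewrite ?enum_uniq //.
  rewrite cat_uniq (perm_uniq l1) (perm_uniq l2) !enum_uniq /= andbT.
  apply/hasPn => y; rewrite (perm_mem l2) (perm_mem l1) !mem_enum inE.
  by case/andP.
move=> y; rewrite mem_cat (perm_mem l1) (perm_mem l2) !mem_enum inE.
case: (boolP (y \in Ox)) => yO /=; last by [].
by rewrite (subsetP OA).
Qed.

End Build.

Local Close Scope group_scope.

Theorem proposition4p9 (gT : finGroupType) (F : hfamily gT) (O : orderings gT) :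
  indexing_system F ->
  (forall H K : {group gT}, K \proper H -> orbit_in F H K ->
     is_orbit_ordering H K (projT2 (O H K))) ->
  forall (H : {group gT}) (n : nat) (f : gT -> {perm 'I_n}),
    morphic H f -> (admissible_SM F O H f <-> F H n f).
Proof.
move=> IS HO H n f fM; split.
- case=> t [wf fx]; apply/(InF_top IS fM).
  have ut : uniq (leaves t) by rewrite (perm_uniq wf) enum_uniq.
  have := claim IS HO fM ut (fun h hH => teq_R (GamON1 HO) (GamONV HO) (GamONM HO) (fx h hH)).
  congr (InF F f H _); apply/setP => y; rewrite inE in_setT (perm_mem wf) mem_enum //.
- move=> HF; have HT := (InF_top IS fM).1 HF.
  have st : stable f H setT by move=> *; rewrite in_setT.
  have [t [l fx]] := claim2 IS HO fM st HT.
  exists t; split => //; rewrite /wf_tree; apply: (perm_trans l).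
  apply: uniq_perm; rewrite ?enum_uniq // => y; by rewrite !mem_enum in_setT.
Qed.
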